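(* Let $M>1$, $\tau>0$, $\kappa\in(0,1)$, $T>0$. Let $p\in C^2(\mathbb{R})$ with $p(x)\in(p_{min},1]$ for all $x$ (some $p_{min}\ge0$), and $0\le p'(x)\le c_p(1-p(x))$, $|p''(x)|\le c_p(1-p(x))$ for all $x$, for some $c_p>0$. Let $f_0\ge0$ with $\int_{\mathbb{R}}f_0\,dx=1$, $\int_{\mathbb{R}}pf_0^2\,dx<\infty$, and let $f\ge0$ be a sufficiently regular function on $\mathbb{R}\times[0,T]$ (smooth, with $f,\partial_xf$ decaying as $|x|\to\infty$ so that integrations by parts produce no boundary terms) with $f(\cdot,0)=f_0$ solving \[ \partial_tf+\frac{M-1}{\sqrt\tau}a(t)\partial_x(pf)-\frac{(M-1)^2}{2}\Big(a^2(t)+\frac{1}{M-1}b(t)\Big)\partial^2_{xx}(pf)=0, \] with $a(t)=\int(\kappa-p)f\,dx$, $b(t)=\int pf\,dx\int(1-p)f\,dx$. Set $\alpha(t)=\int_{\mathbb{R}}p f\,dx$ and $\beta(t)=\int_{\mathbb{R}}(1-p)pf\,dx$. Then there is $c_0$ depending only on $c_p$, $\tau$ and $M$ such that \[ |\alpha'(t)|\le c_0\beta(t),\qquad |\beta'(t)|\le c_0\beta(t),\qquad t>0, \] and in particular $\beta(t)\ge\beta(0)e^{-c_0t}$ for $t>0$. *)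

(* Defs.v *)
From Stdlib Require Import Reals.
From Coquelicot Require Import Coquelicot.
Open Scope R_scope.

Definition int_R (g : R -> R) : R :=
  RInt_gen g (Rbar_locally m_infty) (Rbar_locally p_infty).

Definition integrable_R (g : R -> R) : Prop :=
  ex_RInt_gen g (Rbar_locally m_infty) (Rbar_locally p_infty).

Definition has_int_R (g : R -> R) (l : R) : Prop :=
  is_RInt_gen g (Rbar_locally m_infty) (Rbar_locally p_infty) l.

Definition vanishes_at_infty (g : R -> R) : Prop :=
  filterlim g (Rbar_locally m_infty) (locally 0) /\
  filterlim g (Rbar_locally p_infty) (locally 0).

Definition cont_on_strip (T : R) (h : R -> R -> R) : Prop :=
  forall x t, 0 <= t <= T ->
    filterlim (fun z : R * R => h (fst z) (snd z))
      (within (fun z : R * R => 0 <= snd z <= T) (locally (x, t)))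
      (locally (h x t)).

(* Main.v *)
Require Import Defs.
From Stdlib Require Import Reals Lra Lia Psatz.
From Coquelicot Require Import Coquelicot.
Open Scope R_scope.

Lemma RInt_correctR (f : R -> R) a b : ex_RInt f a b -> is_RInt f a b (RInt f a b).
Proof. exact (RInt_correct (V:=R_CompleteNormedModule) f a b). Qed.

Definition FP := filter_prod (Rbar_locally m_infty) (Rbar_locally p_infty).

Definition lim_ab (F : R -> R -> R) (l : R) : Prop :=
  forall eps : posreal, exists A, forall a b, a < -A -> A < b -> Rabs (F a b - l) < eps.

Lemma ball_R (x y e : R) : ball x e y <-> Rabs (y - x) < e.
Proof. reflexivity. Qed.

Lemma lim_ab_filter F l : lim_ab F l <->
  filterlim (fun ab : R*R => F (fst ab) (snd ab)) FP (locally l).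
Proof.
  split.
  - intros H P [eps HP].
    destruct (H eps) as [A HA].
    unfold filtermap. exists (fun a => a < -A) (fun b => A < b).
    + exists (-A). tauto.
    + exists A. tauto.
    + intros x y Hx Hy. apply HP. apply ball_R. simpl. now apply HA.
  - intros H eps.
    assert (HL : locally l (ball l eps)) by (exists eps; tauto).
    destruct (H _ HL) as [Q R0 [M1 HQ] [M2 HR] HP].
    exists (Rmax (Rabs M1) (Rabs M2)).
    intros a b Ha Hb.
    assert (Q a). { apply HQ. pose proof (Rmax_l (Rabs M1) (Rabs M2)).
      pose proof (Rle_abs (-M1)). rewrite Rabs_Ropp in H1. lra. }
    assert (R0 b). { apply HR. pose proof (Rmax_r (Rabs M1) (Rabs M2)).
      pose proof (Rle_abs M2). lra. }
    exact (HP a b H0 H1).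
Qed.

Lemma has_int_of_filterlim k l : (forall a b, ex_RInt k a b) ->
  filterlim (fun ab : R*R => RInt k (fst ab) (snd ab)) FP (locally l) -> has_int_R k l.
Proof.
  intros Hex H P HP.
  specialize (H P HP). unfold filtermap in H.
  unfold filtermapi. eapply filter_imp; [|exact H].
  intros [a b] Hp. simpl in *. exists (RInt k a b). split; [exact (RInt_correct k a b (Hex a b)) | exact Hp].
Qed.

Lemma has_int_of_lim k l : (forall a b, ex_RInt k a b) ->
  lim_ab (fun a b => RInt k a b) l -> has_int_R k l.
Proof. intros Hex H. apply has_int_of_filterlim; auto. now apply lim_ab_filter. Qed.

Lemma lim_of_has_int k l : (forall a b, ex_RInt k a b) -> has_int_R k l ->
  lim_ab (fun a b => RInt k a b) l.
Proof.
  intros Hex H. apply lim_ab_filter. intros P HP.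
  specialize (H P HP). unfold filtermapi in H. unfold filtermap.
  eapply filter_imp; [|exact H].
  intros [a b] [y [Hy Py]]. simpl in *. now rewrite (is_RInt_unique _ _ _ _ Hy).
Qed.

Lemma has_int_exRInt G l : has_int_R G l -> forall a b, ex_RInt G a b.
Proof.
  intros H.
  assert (HL : locally l (fun _ => True)) by apply filter_true.
  destruct (H _ HL) as [Q R0 [M1 HQ] [M2 HR] HP].
  assert (Hmain : forall a b, a <= b -> ex_RInt G a b).
  { intros a b Hab.
    set (a' := Rmin a M1 - 1). set (b' := Rmax b M2 + 1).
    assert (Qa : Q a') by (apply HQ; unfold a'; pose proof (Rmin_r a M1); lra).
    assert (Rb : R0 b') by (apply HR; unfold b'; pose proof (Rmax_r b M2); lra).
    destruct (HP _ _ Qa Rb) as [y [Hy _]]. simpl in Hy.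
    assert (E : ex_RInt G a' b') by (exists y; exact Hy).
    pose proof (Rmin_l a M1). pose proof (Rmax_l b M2).
    apply (ex_RInt_Chasles_1 (V:=R_CompleteNormedModule) G a b b'). unfold b'; split; lra.
    apply (ex_RInt_Chasles_2 (V:=R_CompleteNormedModule) G a' a b'). unfold a', b'; split; lra. exact E. }
  intros a b. destruct (Rle_lt_dec a b).
  - now apply Hmain.
  - apply (ex_RInt_swap (V:=R_CompleteNormedModule)). apply Hmain. lra.
Qed.

Lemma RInt_Ch k a b c : (forall a b, ex_RInt k a b) ->
  RInt k a b + RInt k b c = RInt k a c.
Proof. intros H. exact (RInt_Chasles k a b c (H a b) (H b c)). Qed.

Lemma RInt_dom k G a b : a <= b -> ex_RInt k a b -> ex_RInt G a b ->
  (forall x, a <= x <= b -> Rabs (k x) <= G x) -> Rabs (RInt k a b) <= RInt G a b.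
Proof.
  intros Hab Hk HG H.
  apply (norm_RInt_le k G a b); auto; apply RInt_correctR; auto.
Qed.

Lemma nest k G a b c d : (forall a b, ex_RInt k a b) -> (forall a b, ex_RInt G a b) ->
  (forall x, Rabs (k x) <= G x) -> a <= c -> c <= d -> d <= b ->
  Rabs (RInt k a b - RInt k c d) <= RInt G a b - RInt G c d.
Proof.
  intros Hk HG H h1 h2 h3.
  rewrite <- (RInt_Ch k a c b Hk), <- (RInt_Ch k c d b Hk).
  rewrite <- (RInt_Ch G a c b HG), <- (RInt_Ch G c d b HG).
  pose proof (RInt_dom k G a c h1 (Hk _ _) (HG _ _) (fun x _ => H x)).
  pose proof (RInt_dom k G d b h3 (Hk _ _) (HG _ _) (fun x _ => H x)).
  replace (RInt k a c + (RInt k c d + RInt k d b) - RInt k c d)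
    with (RInt k a c + RInt k d b) by ring.
  pose proof (Rabs_triang (RInt k a c) (RInt k d b)). lra.
Qed.

Lemma tail_bound k G lk lG : has_int_R k lk -> has_int_R G lG ->
  (forall a b, ex_RInt k a b) -> (forall x, Rabs (k x) <= G x) ->
  forall A, 0 <= A -> Rabs (lk - RInt k (-A) A) <= lG - RInt G (-A) A.
Proof.
  intros Hk HG Hex H A HA.
  pose proof (has_int_exRInt _ _ HG) as HGex.
  apply Rle_plus_epsilon. intros eps Heps.
  destruct (lim_of_has_int _ _ Hex Hk (mkposreal (eps/2) ltac:(lra))) as [A1 H1].
  destruct (lim_of_has_int _ _ HGex HG (mkposreal (eps/2) ltac:(lra))) as [A2 H2].
  simpl in *.
  set (B := Rmax A (Rmax A1 A2) + 1).
  pose proof (Rmax_l A (Rmax A1 A2)). pose proof (Rmax_r A (Rmax A1 A2)).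
  pose proof (Rmax_l A1 A2). pose proof (Rmax_r A1 A2).
  assert (e1 : Rabs (RInt k (-B) B - lk) < eps/2) by (apply H1; unfold B; lra).
  assert (e2 : Rabs (RInt G (-B) B - lG) < eps/2) by (apply H2; unfold B; lra).
  assert (e3 := nest k G (-B) B (-A) A Hex HGex H ltac:(unfold B; lra) ltac:(lra) ltac:(unfold B; lra)).
  revert e1 e2 e3.
  generalize (RInt k (-B) B) (RInt G (-B) B) (RInt k (-A) A) (RInt G (-A) A).
  intros x y z w e1 e2 e3. simpl in x, y, z, w.
  apply Rabs_def2 in e1. apply Rabs_def2 in e2.
  pose proof (Rabs_triang (lk - x) (x - z)) as T. replace (lk - x + (x - z)) with (lk - z) in T by ring.
  assert (Rabs (lk - x) < eps/2) by (apply Rabs_def1; lra).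
  lra.
Qed.

Lemma RInt_0 k : RInt k 0 0 = 0.
Proof. exact (RInt_point 0 k). Qed.

Lemma int_abs_le k G lk lG : has_int_R k lk -> has_int_R G lG ->
  (forall a b, ex_RInt k a b) -> (forall x, Rabs (k x) <= G x) -> Rabs lk <= lG.
Proof.
  intros. pose proof (tail_bound k G lk lG H H0 H1 H2 0 (Rle_refl 0)).
  rewrite Ropp_0, !RInt_0 in H3. now rewrite Rminus_0_r, Rminus_0_r in H3.
Qed.

Lemma int_nonneg k lk : has_int_R k lk -> (forall a b, ex_RInt k a b) ->
  (forall x, 0 <= k x) -> 0 <= lk.
Proof.
  intros. assert (Rabs lk <= lk). apply (int_abs_le k k); auto.
  intros x. rewrite Rabs_pos_eq; auto. lra.
  pose proof (Rle_abs lk). pose proof (Rabs_pos lk). lra.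
Qed.

Lemma dom_has_int k G lG : has_int_R G lG -> (forall a b, ex_RInt k a b) ->
  (forall x, Rabs (k x) <= G x) -> exists lk, has_int_R k lk.
Proof.
  intros HG Hex H.
  pose proof (has_int_exRInt _ _ HG) as HGex.
  assert (PF : ProperFilter FP).
  { unfold FP. apply filter_prod_proper; apply Rbar_locally_filter. }
  destruct (proj1 (filterlim_locally_cauchy (U:=R_CompleteSpace) (F:=FP)
     (fun ab : R*R => RInt k (fst ab) (snd ab)))) as [y Hy].
  - intros eps.
    destruct (lim_of_has_int _ _ HGex HG (mkposreal (eps/4) ltac:(destruct eps; simpl; lra))) as [A HA].
    simpl in HA.
    set (A' := Rmax A 0).
    exists (fun ab : R*R => fst ab < -A' /\ A' < snd ab). split.
    + exists (fun a => a < -A') (fun b => A' < b).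
      * exists (-A'). tauto.
      * exists A'. tauto.
      * intros; simpl; tauto.
    + assert (HA' : forall a b, a < -A' -> A' < b -> Rabs (RInt G a b - lG) < eps/4).
      { intros a b h1 h2. apply HA; unfold A' in *; pose proof (Rmax_l A 0); lra. }
      assert (A'0 : 0 <= A') by (unfold A'; apply Rmax_r).
      assert (Key : forall a b c d, a < -A' -> A' < b -> c < -A' -> A' < d -> a <= c -> d <= b ->
          Rabs (RInt k a b - RInt k c d) < eps/2).
      { intros a b c d h1 h2 h3 h4 h5 h6.
        pose proof (nest k G a b c d Hex HGex H h5 ltac:(lra) h6).
        pose proof (HA' a b h1 h2). pose proof (HA' c d h3 h4).
        apply Rabs_def2 in H1. apply Rabs_def2 in H2. lra. }
      intros [a b] [c d] [h1 h2] [h3 h4]. simpl in *. apply ball_R.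
      pose proof (Key a b (Rmax a c) (Rmin b d) h1 h2
        ltac:(apply Rmax_lub_lt; lra) ltac:(apply Rmin_glb_lt; lra) (Rmax_l _ _) (Rmin_l _ _)).
      pose proof (Key c d (Rmax a c) (Rmin b d) h3 h4
        ltac:(apply Rmax_lub_lt; lra) ltac:(apply Rmin_glb_lt; lra) (Rmax_r _ _) (Rmin_r _ _)).
      pose proof (Rabs_triang (RInt k c d - RInt k (Rmax a c) (Rmin b d)) (RInt k (Rmax a c) (Rmin b d) - RInt k a b)).
      rewrite (Rabs_minus_sym _ (RInt k a b)) in H2.
      replace (RInt k c d - RInt k (Rmax a c) (Rmin b d) + (RInt k (Rmax a c) (Rmin b d) - RInt k a b))
        with (RInt k c d - RInt k a b) in H2 by ring.
      destruct eps; simpl in *; lra.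
  - exists y. apply has_int_of_filterlim; auto.
Qed.

Lemma has_int_ext f g l : (forall x, f x = g x) -> has_int_R f l -> has_int_R g l.
Proof.
  intros E H. unfold has_int_R. apply (is_RInt_gen_ext f g); [ | exact H].
  exists (fun _ => True) (fun _ => True); try apply filter_true.
  intros; apply E.
Qed.

Lemma has_int_int k l : has_int_R k l -> int_R k = l.
Proof. intros H. unfold int_R. exact (is_RInt_gen_unique (V:=R_CompleteNormedModule) k l H). Qed.

Definition FLm := @filter_filter _ _ (Rbar_locally_filter m_infty).
Definition FLp := @filter_filter _ _ (Rbar_locally_filter p_infty).

Lemma has_int_scal k l c : has_int_R k l -> has_int_R (fun x => c * k x) (c * l).
Proof. intros H. exact (is_RInt_gen_scal (V:=R_NormedModule) (FFa:=FLm) (FFb:=FLp) k c l H). Qed.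

Lemma has_int_plus k1 k2 l1 l2 : has_int_R k1 l1 -> has_int_R k2 l2 ->
  has_int_R (fun x => k1 x + k2 x) (l1 + l2).
Proof. intros H1 H2. exact (is_RInt_gen_plus (V:=R_NormedModule) (FFa:=FLm) (FFb:=FLp) k1 k2 l1 l2 H1 H2). Qed.

Lemma has_int_minus k1 k2 l1 l2 : has_int_R k1 l1 -> has_int_R k2 l2 ->
  has_int_R (fun x => k1 x - k2 x) (l1 - l2).
Proof. intros H1 H2. exact (is_RInt_gen_minus (V:=R_NormedModule) (FFa:=FLm) (FFb:=FLp) k1 k2 l1 l2 H1 H2). Qed.

Lemma tail_small G lG : has_int_R G lG -> forall eps, 0 < eps ->
  exists A, 0 <= A /\ lG - RInt G (-A) A < eps.
Proof.
  intros HG eps He.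
  destruct (lim_of_has_int _ _ (has_int_exRInt _ _ HG) HG (mkposreal eps He)) as [A HA].
  simpl in HA. exists (Rmax A 0 + 1). split.
  - pose proof (Rmax_r A 0). lra.
  - pose proof (Rmax_l A 0).
    assert (Rabs (RInt G (- (Rmax A 0 + 1)) (Rmax A 0 + 1) - lG) < eps) by (apply HA; lra).
    apply Rabs_def2 in H0. lra.
Qed.

Lemma param_lim (K : R -> R -> R) (L : R -> R) (k0 : R -> R) (l0 : R) G lG (U : R -> Prop) s0 :
  has_int_R G lG ->
  (forall s, U s -> has_int_R (K s) (L s)) ->
  (forall s a b, U s -> ex_RInt (K s) a b) ->
  (forall s x, U s -> Rabs (K s x) <= G x) ->
  has_int_R k0 l0 -> (forall a b, ex_RInt k0 a b) -> (forall x, Rabs (k0 x) <= G x) ->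
  (forall A eps, 0 < eps -> exists d, 0 < d /\ forall s x, U s -> Rabs (s - s0) < d ->
       -A <= x <= A -> Rabs (K s x - k0 x) <= eps) ->
  forall eps, 0 < eps -> exists d, 0 < d /\ forall s, U s -> Rabs (s - s0) < d ->
       Rabs (L s - l0) < eps.
Proof.
  intros HG HK HKex HKd Hk0 Hk0ex Hk0d Hunif eps He.
  pose proof (has_int_exRInt _ _ HG) as HGex.
  destruct (tail_small G lG HG (eps/4) ltac:(lra)) as [A [HA0 HA]].
  set (eta := eps / (4 * (2 * A + 1))).
  assert (Heta : 0 < eta) by (unfold eta; apply Rdiv_lt_0_compat; lra).
  destruct (Hunif A eta Heta) as [d [Hd Hdd]].
  exists d. split; auto. intros s Us Hs.
  pose proof (tail_bound _ _ _ _ (HK s Us) HG (fun a b => HKex s a b Us) (fun x => HKd s x Us) A HA0) as T1.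
  pose proof (tail_bound _ _ _ _ Hk0 HG Hk0ex Hk0d A HA0) as T2.
  assert (M : Rabs (RInt (K s) (-A) A - RInt k0 (-A) A) <= (A - - A) * eta).
  { rewrite <- (RInt_minus (V:=R_CompleteNormedModule)); auto.
    apply abs_RInt_le_const. lra.
    apply (ex_RInt_minus (V:=R_CompleteNormedModule)); auto.
    intros t Ht. apply Hdd; auto. }
  assert (E : (A - - A) * eta < eps / 4).
  { unfold eta. replace (A - - A) with (2 * A) by ring.
    apply Rmult_lt_reg_r with (4 * (2 * A + 1)). lra.
    field_simplify; try lra. }
  pose proof (Rabs_triang (L s - RInt (K s) (-A) A) (RInt (K s) (-A) A - RInt k0 (-A) A)).
  pose proof (Rabs_triang (L s - RInt (K s) (-A) A + (RInt (K s) (-A) A - RInt k0 (-A) A)) (RInt k0 (-A) A - l0)).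
  replace (L s - RInt (K s) (- A) A + (RInt (K s) (- A) A - RInt k0 (- A) A) + (RInt k0 (- A) A - l0))
    with (L s - l0) in H0 by ring.
  rewrite Rabs_minus_sym in T2. lra.
Qed.

Lemma has_int_val k l l' : l = l' -> has_int_R k l -> has_int_R k l'.
Proof. intros ->; auto. Qed.

Lemma unif_t (F : R -> R -> R) t0 : (forall x, continuity_2d_pt F x t0) ->
  forall A eps, 0 < eps -> exists d, 0 < d /\ forall s x, Rabs (s - t0) < d ->
    -A <= x <= A -> Rabs (F x s - F x t0) <= eps.
Proof.
  intros HF A eps He.
  destruct (uniform_continuity_2d_1d F (-A) A t0 (fun x _ => HF x) (mkposreal eps He)) as [d Hd].
  exists d. split; [apply cond_pos|]. intros s x Hs Hx.
  apply Rlt_le. apply (Hd x t0 x s); auto.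
  - pose proof (cond_pos d); split; lra.
  - apply Rabs_def2 in Hs. split; lra.
  - rewrite Rminus_eq_0, Rabs_R0. apply cond_pos.
Qed.

Lemma param_deriv (H Ht : R -> R -> R) G lG t0 r (I : R -> R) :
  has_int_R G lG -> 0 < r ->
  (forall s, Rabs (s - t0) < r -> has_int_R (fun x => H x s) (I s)) ->
  (forall s a b, Rabs (s - t0) < r -> ex_RInt (fun x => H x s) a b) ->
  (forall a b, ex_RInt (fun x => Ht x t0) a b) ->
  (forall x s, Rabs (s - t0) < r -> is_derive (fun s => H x s) s (Ht x s)) ->
  (forall x s, Rabs (s - t0) < r -> Rabs (Ht x s) <= G x) ->
  (forall x, continuity_2d_pt Ht x t0) ->
  exists l, has_int_R (fun x => Ht x t0) l /\ is_derive I t0 l.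
Proof.
  intros HG Hr HI HIex Htex Hder Hdom Hcont.
  assert (Hd0 : forall x, Rabs (Ht x t0) <= G x).
  { intros x. apply Hdom. rewrite Rminus_eq_0, Rabs_R0. auto. }
  destruct (dom_has_int _ _ _ HG Htex Hd0) as [l Hl].
  exists l. split; auto.
  assert (MV : forall x h, h <> 0 -> Rabs h < r -> exists c, Rabs (c - t0) <= Rabs h /\
     (H x (t0 + h) - H x t0) / h = Ht x c).
  { intros x h Hh0 Hh.
    destruct (MVT_cor4 (fun s => H x s) (Ht x) t0 (Rabs h)) with (b := t0 + h) as [c [Hc1 Hc2]].
    - intros c Hc. apply Hder. lra.
    - replace (t0 + h - t0) with h by ring. lra.
    - exists c. replace (t0 + h - t0) with h in Hc1, Hc2 by ring. split; auto.
      rewrite Hc1. field. auto. }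
  apply is_derive_Reals. intros eps He.
  destruct (param_lim (fun h x => (H x (t0 + h) - H x t0) / h) (fun h => (I (t0 + h) - I t0) / h)
     (fun x => Ht x t0) l G lG (fun h => h <> 0 /\ Rabs h < r) 0 HG) with (eps := eps)
     as [d [Hd Hdd]]; auto.
  - intros h [Hh0 Hh].
    apply has_int_val with (/ h * (I (t0 + h) - I t0)). unfold Rdiv; ring.
    apply has_int_ext with (fun x => / h * (H x (t0 + h) - H x t0)).
    intros x; unfold Rdiv; ring.
    apply has_int_scal. apply has_int_minus; apply HI.
    replace (t0 + h - t0) with h by ring. auto.
    rewrite Rminus_eq_0, Rabs_R0. auto.
  - intros h a b [Hh0 Hh].
    apply (ex_RInt_ext (V:=R_CompleteNormedModule) (fun x => scal (/ h) (minus (H x (t0 + h)) (H x t0)))).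
    intros x _. unfold scal, minus, plus, opp; simpl. unfold mult; simpl. unfold Rdiv; ring.
    apply (ex_RInt_scal (V:=R_CompleteNormedModule)). apply (ex_RInt_minus (V:=R_CompleteNormedModule)).
    apply HIex. replace (t0 + h - t0) with h by ring. auto.
    apply HIex. rewrite Rminus_eq_0, Rabs_R0. auto.
  - intros h x [Hh0 Hh]. destruct (MV x h Hh0 Hh) as [c [Hc1 Hc2]]. rewrite Hc2.
    apply Hdom. lra.
  - intros A eps' He'. destruct (unif_t Ht t0 Hcont A eps' He') as [d [Hd Hdd]].
    exists d. split; auto. intros h x [Hh0 Hh] Hhd Hx.
    rewrite Rminus_0_r in Hhd.
    destruct (MV x h Hh0 Hh) as [c [Hc1 Hc2]]. rewrite Hc2. apply Hdd; auto. lra.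
  - exists (mkposreal (Rmin d r) ltac:(apply Rmin_glb_lt; auto)). simpl.
    intros h Hh0 Hh. apply Hdd.
    + split; auto. pose proof (Rmin_r d r); lra.
    + rewrite Rminus_0_r. pose proof (Rmin_l d r); lra.
Qed.

Lemma param_cont (H Hc : R -> R -> R) G lG (I : R -> R) (U : R -> Prop) t0 :
  has_int_R G lG ->
  (forall s, U s -> has_int_R (fun x => H x s) (I s)) ->
  (forall s a b, U s -> ex_RInt (fun x => H x s) a b) ->
  (forall s x, U s -> Rabs (H x s) <= G x) -> U t0 ->
  (forall x s, U s -> Hc x s = H x s) -> (forall x, continuity_2d_pt Hc x t0) ->
  forall eps, 0 < eps -> exists d, 0 < d /\ forall s, U s -> Rabs (s - t0) < d ->
     Rabs (I s - I t0) < eps.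
Proof.
  intros HG HI HIex Hdom Ut0 Hceq Hcont eps He.
  apply (param_lim (fun s x => H x s) I (fun x => H x t0) (I t0) G lG U t0); auto.
  intros A eps' He'. destruct (unif_t Hc t0 Hcont A eps' He') as [d [Hd Hdd]].
  exists d. split; auto. intros s x Us Hs Hx.
  rewrite <- (Hceq x s Us), <- (Hceq x t0 Ut0). auto.
Qed.

Lemma int_deriv_zero (K k : R -> R) l : (forall x, is_derive K x (k x)) ->
  (forall x, continuous k x) -> has_int_R k l ->
  filterlim K (Rbar_locally m_infty) (locally 0) ->
  filterlim K (Rbar_locally p_infty) (locally 0) -> l = 0.
Proof.
  intros HK Hc Hl Hm Hp.
  assert (Hex : forall a b, ex_RInt k a b).
  { intros a b. apply (ex_RInt_continuous (V:=R_CompleteNormedModule)). intros; apply Hc. }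
  assert (HR : forall a b, RInt k a b = K b - K a).
  { intros a b. apply (is_RInt_unique (V:=R_CompleteNormedModule)).
    apply (is_RInt_derive (V:=R_CompleteNormedModule) K k); intros; auto. }
  assert (B : forall eps, 0 < eps -> Rabs l <= 3 * eps).
  { intros eps He.
    destruct (lim_of_has_int _ _ Hex Hl (mkposreal eps He)) as [A HA]. simpl in HA.
    assert (L0 : locally 0 (ball 0 eps)) by (exists (mkposreal eps He); tauto).
    destruct (Hm _ L0) as [M1 HM1]. destruct (Hp _ L0) as [M2 HM2].
    set (a := Rmin (-A) M1 - 1). set (b := Rmax A M2 + 1).
    pose proof (Rmin_l (-A) M1). pose proof (Rmin_r (-A) M1).
    pose proof (Rmax_l A M2). pose proof (Rmax_r A M2).
    specialize (HA a b ltac:(unfold a; lra) ltac:(unfold b; lra)).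
    specialize (HM1 a ltac:(unfold a; lra)). specialize (HM2 b ltac:(unfold b; lra)).
    apply ball_R in HM1. apply ball_R in HM2. rewrite HR in HA.
    change (Rabs (K a - 0) < eps) in HM1. change (Rabs (K b - 0) < eps) in HM2.
    rewrite Rminus_0_r in HM1, HM2.
    apply Rabs_def2 in HA. apply Rabs_def2 in HM1. apply Rabs_def2 in HM2.
    apply Rabs_le. lra. }
  destruct (Req_dec l 0) as [E|E]; auto.
  pose proof (Rabs_pos_lt l E).
  specialize (B (Rabs l / 6) ltac:(lra)). lra.
Qed.

Lemma c2d_restrict F x y : continuity_2d_pt F x y -> continuous (fun u => F u y) x.
Proof.
  intros H P [eps HP]. destruct (H eps) as [d Hd].
  exists d. intros u Hu. apply HP. apply ball_R. apply ball_R in Hu.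
  apply Hd; auto. rewrite Rminus_eq_0, Rabs_R0. apply cond_pos.
Qed.

Lemma c2d_x (w : R -> R) x y : continuous w x -> continuity_2d_pt (fun u v => w u) x y.
Proof.
  intros H eps. assert (L : locally (w x) (ball (w x) eps)) by (exists eps; tauto).
  destruct (H _ L) as [d Hd]. exists d. intros u v Hu Hv.
  apply (Hd u). apply ball_R. auto.
Qed.

Lemma c2d_t (h : R -> R) x y :
  (forall eps, 0 < eps -> exists d, 0 < d /\ forall v, Rabs (v - y) < d -> Rabs (h v - h y) < eps) ->
  continuity_2d_pt (fun u v => h v) x y.
Proof.
  intros H eps. destruct (H eps (cond_pos eps)) as [d [Hd Hdd]].
  exists (mkposreal d Hd). simpl. intros u v _ Hv. auto.
Qed.

Definition clamp (T v : R) := Rmax 0 (Rmin T v).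

Lemma clamp_id T v : 0 <= v <= T -> clamp T v = v.
Proof. intros [h1 h2]. unfold clamp. rewrite Rmin_right by lra. rewrite Rmax_right; lra. Qed.

Lemma clamp_range T v : 0 <= T -> 0 <= clamp T v <= T.
Proof.
  intros HT. unfold clamp. split. apply Rmax_l.
  apply Rmax_lub; auto. apply Rmin_l.
Qed.

Lemma clamp_lip T v w : 0 <= T -> Rabs (clamp T v - clamp T w) <= Rabs (v - w).
Proof.
  intros HT. unfold clamp.
  destruct (Rle_dec T v); destruct (Rle_dec T w);
  [rewrite (Rmin_left T v), (Rmin_left T w) by lra
  |rewrite (Rmin_left T v), (Rmin_right T w) by lra
  |rewrite (Rmin_right T v), (Rmin_left T w) by lra
  |rewrite (Rmin_right T v), (Rmin_right T w) by lra];
  (destruct (Rle_dec 0 v); destruct (Rle_dec 0 w));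
  repeat first [rewrite (Rmax_right 0 v) by lra | rewrite (Rmax_left 0 v) by lra
        | rewrite (Rmax_right 0 w) by lra | rewrite (Rmax_left 0 w) by lra
        | rewrite (Rmax_right 0 T) by lra];
  try (rewrite Rminus_eq_0, Rabs_R0; apply Rabs_pos);
  unfold Rabs; repeat destruct Rcase_abs; lra.
Qed.

Lemma c2d_strip T (h : R -> R -> R) x s : 0 <= T -> cont_on_strip T h ->
  continuity_2d_pt (fun u v => h u (clamp T v)) x s.
Proof.
  intros HT H eps.
  pose proof (clamp_range T s HT) as Hcs.
  specialize (H x (clamp T s) Hcs).
  assert (L : locally (h x (clamp T s)) (ball (h x (clamp T s)) eps)) by (exists eps; tauto).
  destruct (H _ L) as [d Hd].
  exists d. intros u v Hu Hv.
  apply ball_R. apply (Hd (u, clamp T v)).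
  - split; simpl; apply ball_R; auto.
    pose proof (clamp_lip T v s HT). lra.
  - simpl. apply clamp_range; auto.
Qed.

Lemma dmul (f g : R -> R) x a b : is_derive f x a -> is_derive g x b ->
  is_derive (fun y => f y * g y) x (a * g x + f x * b).
Proof. intros Ha Hb. apply (is_derive_mult f g x a b Ha Hb). intros; apply Rmult_comm. Qed.

Lemma dplus (f g : R -> R) x a b : is_derive f x a -> is_derive g x b ->
  is_derive (fun y => f y + g y) x (a + b).
Proof. intros Ha Hb. apply (is_derive_plus (V:=R_NormedModule) f g x a b Ha Hb). Qed.

Lemma dminus (f g : R -> R) x a b : is_derive f x a -> is_derive g x b ->
  is_derive (fun y => f y - g y) x (a - b).
Proof. intros Ha Hb. apply (is_derive_minus (V:=R_NormedModule) f g x a b Ha Hb). Qed.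

Lemma dconst (c : R) x : is_derive (fun _ => c) x 0.
Proof. apply (is_derive_const (V:=R_NormedModule) c x). Qed.

Lemma dval (f : R -> R) (x a b : R) : is_derive f x a -> a = b -> is_derive f x b.
Proof. intros H ->; auto. Qed.

Lemma cmul (f g : R -> R) x : continuous f x -> continuous g x -> continuous (fun y => f y * g y) x.
Proof. intros; apply (continuous_mult (K:=R_AbsRing) f g); auto. Qed.

Lemma cplus (f g : R -> R) x : continuous f x -> continuous g x -> continuous (fun y => f y + g y) x.
Proof. intros; apply (continuous_plus (V:=R_NormedModule) f g); auto. Qed.

Lemma cminus (f g : R -> R) x : continuous f x -> continuous g x -> continuous (fun y => f y - g y) x.
Proof. intros; apply (continuous_minus (V:=R_NormedModule) f g); auto. Qed.

Lemma cconst (c : R) x : continuous (fun _ : R => c) x.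
Proof. apply (continuous_const (U:=R_UniformSpace) (V:=R_UniformSpace)). Qed.

Lemma abs_sub a b : Rabs (a - b) <= Rabs a + Rabs b.
Proof. unfold Rminus. rewrite <- (Rabs_Ropp b). apply Rabs_triang. Qed.

Lemma abs_mul_le a b A B : Rabs a <= A -> Rabs b <= B -> Rabs (a * b) <= A * B.
Proof.
  intros. rewrite Rabs_mult. apply Rmult_le_compat; auto; apply Rabs_pos.
Qed.

Lemma vanish_dom (F : (R -> Prop) -> Prop) {FF : Filter F} (K u v : R -> R) B :
  filterlim u F (locally 0) -> filterlim v F (locally 0) -> 0 <= B ->
  (forall x, Rabs (K x) <= B * (Rabs (u x) + Rabs (v x))) -> filterlim K F (locally 0).
Proof.
  intros Hu Hv HB HK P [eps HP].
  set (e := eps / (2 * B + 1)).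
  assert (He : 0 < e) by (unfold e; apply Rdiv_lt_0_compat; [apply cond_pos | lra]).
  assert (L : locally 0 (ball 0 (mkposreal e He))) by (exists (mkposreal e He); tauto).
  pose proof (Hu _ L) as Fu. pose proof (Hv _ L) as Fv.
  unfold filtermap in *.
  apply (filter_imp (fun x => ball 0 (mkposreal e He) (u x) /\ ball 0 (mkposreal e He) (v x))).
  2: now apply filter_and.
  intros x [h1 h2]. apply HP. apply ball_R. change (Rabs (u x - 0) < e) in h1.
  change (Rabs (v x - 0) < e) in h2. rewrite Rminus_0_r in *.
  specialize (HK x).
  assert (B * (Rabs (u x) + Rabs (v x)) <= B * (2 * e)).
  { apply Rmult_le_compat_l; auto. lra. }
  assert (B * (2 * e) < eps).
  { unfold e. pose proof (cond_pos eps).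
    apply Rmult_lt_reg_r with (2 * B + 1). lra. field_simplify; lra. }
  lra.
Qed.

Lemma der_cont (f : R -> R) x l : is_derive f x l -> continuous f x.
Proof. intros H. apply (ex_derive_continuous (K:=R_AbsRing) (V:=R_NormedModule)). exists l; auto. Qed.

Lemma cont_of_eps (h : R -> R) y :
  (forall eps, 0 < eps -> exists d, 0 < d /\ forall v, Rabs (v - y) < d -> Rabs (h v - h y) < eps) ->
  continuous h y.
Proof.
  intros H P [eps HP]. destruct (H eps (cond_pos eps)) as [d [Hd Hdd]].
  exists (mkposreal d Hd). intros v Hv. apply HP. apply ball_R. apply Hdd. apply ball_R in Hv. auto.
Qed.

Lemma eps_of_cont (h : R -> R) y : continuous h y ->
  forall eps, 0 < eps -> exists d, 0 < d /\ forall v, Rabs (v - y) < d -> Rabs (h v - h y) < eps.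
Proof.
  intros H eps He.
  assert (L : locally (h y) (ball (h y) (mkposreal eps He))) by (exists (mkposreal eps He); tauto).
  destruct (H _ L) as [d Hd]. exists d. split; [apply cond_pos|]. intros v Hv.
  apply (Hd v). apply ball_R. auto.
Qed.

Lemma c2d_tc (h : R -> R) x y : continuous h y -> continuity_2d_pt (fun u v => h v) x y.
Proof. intros. apply c2d_t. apply eps_of_cont. auto. Qed.

Lemma cext (f g : R -> R) x : (forall y, f y = g y) -> continuous f x -> continuous g x.
Proof. intros. apply (continuous_ext (T:=R_UniformSpace) (U:=R_UniformSpace) f g); auto. Qed.

Lemma dexp c x : is_derive (fun v => exp (c * v)) x (c * exp (c * x)).
Proof. auto_derive. auto. ring. Qed.

Lemma der_clamp T (h : R -> R) x l : 0 < x < T -> is_derive h x l ->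
  is_derive (fun v => h (clamp T v)) x l.
Proof.
  intros Hx H. apply (is_derive_ext_loc (K:=R_AbsRing) (V:=R_NormedModule) h); auto.
  assert (Hd : 0 < Rmin x (T - x)) by (apply Rmin_glb_lt; lra).
  exists (mkposreal _ Hd). intros y Hy. apply ball_R in Hy. simpl in Hy.
  pose proof (Rmin_l x (T - x)). pose proof (Rmin_r x (T - x)).
  apply Rabs_def2 in Hy. change (y - x < Rmin x (T - x) /\ - Rmin x (T - x) < y - x) in Hy. rewrite clamp_id; auto. split; lra.
Qed.

Lemma mono_interval (phi df : R -> R) t : 0 < t ->
  (forall x, 0 < x < t -> is_derive phi x (df x)) -> (forall x, 0 < x < t -> 0 <= df x) ->
  continuous phi 0 -> continuous phi t -> phi 0 <= phi t.
Proof.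
  intros Ht Hd Hdf C0 Ct.
  assert (Mono : forall x y, 0 < x -> x < y -> y < t -> phi x <= phi y).
  { intros x y h1 h2 h3.
    destruct (MVT_gen phi x y df) as [c [Hc E]].
    - intros z Hz. rewrite Rmin_left, Rmax_right in Hz by lra. apply Hd. lra.
    - intros z Hz. rewrite Rmin_left, Rmax_right in Hz by lra.
      apply continuity_pt_filterlim. eapply der_cont. apply Hd. lra.
    - rewrite Rmin_left, Rmax_right in Hc by lra.
      assert (0 <= df c) by (apply Hdf; lra).
      assert (0 <= df c * (y - x)) by (apply Rmult_le_pos; lra). lra. }
  destruct (Rle_dec (phi 0) (phi t)) as [h|h]; auto. exfalso.
  set (e := (phi 0 - phi t) / 3).
  assert (He : 0 < e) by (unfold e; lra).
  destruct (eps_of_cont phi 0 C0 e He) as [d1 [Hd1 H1]].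
  destruct (eps_of_cont phi t Ct e He) as [d2 [Hd2 H2]].
  set (x := Rmin d1 (t / 2) / 2). set (y := t - Rmin d2 (t / 2) / 2).
  pose proof (Rmin_l d1 (t/2)). pose proof (Rmin_r d1 (t/2)).
  pose proof (Rmin_l d2 (t/2)). pose proof (Rmin_r d2 (t/2)).
  assert (0 < Rmin d1 (t/2)) by (apply Rmin_glb_lt; lra).
  assert (0 < Rmin d2 (t/2)) by (apply Rmin_glb_lt; lra).
  assert (hx : Rabs (phi x - phi 0) < e) by (apply H1; unfold x; rewrite Rminus_0_r, Rabs_pos_eq; lra).
  assert (hy : Rabs (phi y - phi t) < e).
  { apply H2. unfold y. replace (t - Rmin d2 (t / 2) / 2 - t) with (- (Rmin d2 (t / 2) / 2)) by ring.
    rewrite Rabs_Ropp, Rabs_pos_eq; lra. }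
  assert (phi x <= phi y) by (apply Mono; unfold x, y; lra).
  apply Rabs_def2 in hx. apply Rabs_def2 in hy. unfold e in *. lra.
Qed.

Section Main.
Variables (M tau cp kappa T pmin : R) (p dp d2p f0 : R -> R) (f fx fxx ft : R -> R -> R) (g : R -> R) (lg : R).
Hypothesis HM : 1 < M.
Hypothesis Htau : 0 < tau.
Hypothesis Hcp : 0 < cp.
Hypothesis Hk : 0 < kappa < 1.
Hypothesis HT : 0 < T.
Hypothesis Hp : forall x, is_derive p x (dp x).
Hypothesis Hdp : forall x, is_derive dp x (d2p x).
Hypothesis Hd2c : forall x, continuous d2p x.
Hypothesis Hpmin : 0 <= pmin.
Hypothesis Hpr : forall x, pmin < p x <= 1.
Hypothesis Hdpb : forall x, 0 <= dp x <= cp * (1 - p x).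
Hypothesis Hd2pb : forall x, Rabs (d2p x) <= cp * (1 - p x).
Hypothesis Hf0 : forall x, 0 <= f0 x.
Hypothesis Hf0i : has_int_R f0 1.
Hypothesis Hfx : forall x t, 0 <= t <= T -> is_derive (fun y => f y t) x (fx x t).
Hypothesis Hfxx : forall x t, 0 <= t <= T -> is_derive (fun y => fx y t) x (fxx x t).
Hypothesis Hft : forall x t, 0 < t < T -> is_derive (fun s => f x s) t (ft x t).
Hypothesis Hcf : cont_on_strip T f.
Hypothesis Hcfx : cont_on_strip T fx.
Hypothesis Hcfxx : cont_on_strip T fxx.
Hypothesis Hg : has_int_R g lg.
Hypothesis Hgb : forall x t, 0 <= t <= T ->
         Rabs (f x t) <= g x /\ Rabs (fx x t) <= g x /\ Rabs (fxx x t) <= g x.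
Hypothesis Hvan : forall t, 0 <= t <= T ->
       vanishes_at_infty (fun x => f x t) /\ vanishes_at_infty (fun x => fx x t).
Hypothesis Hfpos : forall x t, 0 <= t <= T -> 0 <= f x t.
Hypothesis Hfinit : forall x, f x 0 = f0 x.

Definition a_ t := int_R (fun x => (kappa - p x) * f x t).
Definition b_ t := int_R (fun x => p x * f x t) * int_R (fun x => (1 - p x) * f x t).
Definition c1 := (M - 1) / sqrt tau.
Definition c2 t := (M - 1) ^ 2 / 2 * (a_ t ^ 2 + / (M - 1) * b_ t).

Hypothesis Heq : forall x t, 0 < t < T ->
       ft x t + (M - 1) / sqrt tau * a_ t * Derive (fun y => p y * f y t) x
       - (M - 1) ^ 2 / 2 * (a_ t ^ 2 + / (M - 1) * b_ t)
           * Derive_n (fun y => p y * f y t) 2 x = 0.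

Definition D1 x t := dp x * f x t + p x * fx x t.
Definition D2 x t := d2p x * f x t + 2 * (dp x * fx x t) + p x * fxx x t.

Lemma p_pos x : 0 < p x.
Proof. pose proof (Hpr x); lra. Qed.
Lemma p_le1 x : p x <= 1.
Proof. apply Hpr. Qed.
Lemma dp_abs x : Rabs (dp x) <= cp.
Proof. pose proof (Hdpb x). pose proof (p_pos x). rewrite Rabs_pos_eq by lra. nra. Qed.
Lemma d2p_abs x : Rabs (d2p x) <= cp.
Proof. pose proof (Hd2pb x). pose proof (p_pos x). nra. Qed.
Lemma p_abs x : Rabs (p x) <= 1.
Proof. pose proof (p_pos x). pose proof (p_le1 x). rewrite Rabs_pos_eq; lra. Qed.
Lemma p_cont x : continuous p x.
Proof. eapply der_cont; apply Hp. Qed.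
Lemma dp_cont x : continuous dp x.
Proof. eapply der_cont; apply Hdp. Qed.

Lemma g_nonneg x : 0 <= g x.
Proof. destruct (Hgb x 0) as [H _]. lra. pose proof (Rabs_pos (f x 0)). lra. Qed.

Lemma f_cont x t : 0 <= t <= T -> continuous (fun y => f y t) x.
Proof. intros. eapply der_cont; apply Hfx; auto. Qed.
Lemma fx_cont x t : 0 <= t <= T -> continuous (fun y => fx y t) x.
Proof. intros. eapply der_cont; apply Hfxx; auto. Qed.
Lemma fxx_cont x t : 0 <= t <= T -> continuous (fun y => fxx y t) x.
Proof.
  intros Ht. apply (cext (fun u => fxx u (clamp T t))).
  intros; rewrite clamp_id; auto.
  apply (c2d_restrict (fun u v => fxx u (clamp T v))). apply c2d_strip; auto; lra.
Qed.

Lemma D1_eq x t : 0 <= t <= T -> Derive (fun y => p y * f y t) x = D1 x t.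
Proof.
  intros Ht. apply is_derive_unique. eapply dval. apply dmul. apply Hp. apply Hfx; auto.
  unfold D1; ring.
Qed.

Lemma D1_der x t : 0 <= t <= T -> is_derive (fun y => D1 y t) x (D2 x t).
Proof.
  intros Ht. unfold D1. eapply dval. apply dplus; apply dmul; auto.
  unfold D2; ring.
Qed.

Lemma D2_eq x t : 0 <= t <= T -> Derive_n (fun y => p y * f y t) 2 x = D2 x t.
Proof.
  intros Ht. simpl. rewrite (Derive_ext (Derive (fun y => p y * f y t)) (fun y => D1 y t)).
  apply is_derive_unique. apply D1_der; auto.
  intros; apply D1_eq; auto.
Qed.

Lemma ft_eq x t : 0 < t < T -> ft x t = c2 t * D2 x t - c1 * a_ t * D1 x t.
Proof.
  intros Ht. pose proof (Heq x t Ht). rewrite D1_eq, D2_eq in H by lra.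
  unfold c2, c1. lra.
Qed.


Lemma int_w (k : R -> R) C : 0 <= C -> (forall x, continuous k x) ->
  (forall x, Rabs (k x) <= C * g x) -> has_int_R k (int_R k) /\ (forall a b, ex_RInt k a b).
Proof.
  intros HC Hc Hb.
  assert (Hex : forall a b, ex_RInt k a b).
  { intros a b. apply (ex_RInt_continuous (V:=R_CompleteNormedModule)). intros; apply Hc. }
  destruct (dom_has_int k (fun x => C * g x) (C * lg) (has_int_scal _ _ _ Hg) Hex Hb) as [l Hl].
  split; auto. rewrite (has_int_int _ _ Hl). auto.
Qed.

Lemma wcont (w : R -> R) B t0 : (forall x, continuous w x) -> (forall x, Rabs (w x) <= B) ->
  0 <= t0 <= T -> forall eps, 0 < eps -> exists d, 0 < d /\ forall s, 0 <= s <= T ->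
  Rabs (s - t0) < d -> Rabs (int_R (fun x => w x * f x s) - int_R (fun x => w x * f x t0)) < eps.
Proof.
  intros Hwc Hwb Ht0.
  assert (B0 : 0 <= B) by (pose proof (Hwb 0); pose proof (Rabs_pos (w 0)); lra).
  assert (Hdom : forall s x, 0 <= s <= T -> Rabs (w x * f x s) <= B * g x).
  { intros s x Hs. apply abs_mul_le; auto. apply Hgb; auto. }
  assert (Hint : forall s, 0 <= s <= T -> has_int_R (fun x => w x * f x s) (int_R (fun x => w x * f x s))
     /\ (forall a b, ex_RInt (fun x => w x * f x s) a b)).
  { intros s Hs. apply (int_w _ B); auto. intros x. apply cmul; auto. apply f_cont; auto. }
  apply (param_cont (fun x s => w x * f x s) (fun x s => w x * f x (clamp T s)) (fun x => B * g x) (B * lg)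
     (fun s => int_R (fun x => w x * f x s)) (fun s => 0 <= s <= T) t0).
  - apply has_int_scal; auto.
  - intros s Hs. apply Hint; auto.
  - intros s a b Hs. apply Hint; auto.
  - intros s x Hs. apply Hdom; auto.
  - auto.
  - intros x s Hs. rewrite clamp_id; auto.
  - intros x. apply continuity_2d_pt_mult. apply c2d_x; auto. apply c2d_strip; auto; lra.
Qed.

Lemma clampc (h : R -> R) :
  (forall t0, 0 <= t0 <= T -> forall eps, 0 < eps -> exists d, 0 < d /\ forall s, 0 <= s <= T ->
      Rabs (s - t0) < d -> Rabs (h s - h t0) < eps) ->
  forall y, continuous (fun v => h (clamp T v)) y.
Proof.
  intros H y. apply cont_of_eps. intros eps He.
  destruct (H (clamp T y) (clamp_range T y ltac:(lra)) eps He) as [d [Hd Hdd]].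
  exists d. split; auto. intros v Hv. apply Hdd. apply clamp_range; lra.
  pose proof (clamp_lip T v y ltac:(lra)). lra.
Qed.

Lemma wcontC (w : R -> R) B y : (forall x, continuous w x) -> (forall x, Rabs (w x) <= B) ->
  continuous (fun v => int_R (fun x => w x * f x (clamp T v))) y.
Proof.
  intros Hwc Hwb. apply (clampc (fun t => int_R (fun x => w x * f x t))).
  intros t0 Ht0. apply (wcont w B); auto.
Qed.

Lemma aC_cont y : continuous (fun v => a_ (clamp T v)) y.
Proof.
  unfold a_. apply (wcontC (fun x => kappa - p x) 1).
  - intros; apply cminus. apply cconst. apply p_cont.
  - intros x. pose proof (p_pos x). pose proof (p_le1 x). apply Rabs_le. lra.
Qed.

Lemma bC_cont y : continuous (fun v => b_ (clamp T v)) y.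
Proof.
  unfold b_. apply cmul.
  - apply (wcontC p 1). apply p_cont. apply p_abs.
  - apply (wcontC (fun x => 1 - p x) 1).
    + intros; apply cminus. apply cconst. apply p_cont.
    + intros x. pose proof (p_pos x). pose proof (p_le1 x). apply Rabs_le. lra.
Qed.

Lemma c2C_cont y : continuous (fun v => c2 (clamp T v)) y.
Proof.
  apply (cext (fun v => (M - 1) ^ 2 / 2 * (a_ (clamp T v) * a_ (clamp T v) + / (M - 1) * b_ (clamp T v)))).
  intros v. unfold c2. ring.
  apply cmul. apply cconst. apply cplus. apply cmul; apply aC_cont.
  apply cmul. apply cconst. apply bC_cont.
Qed.

Lemma wbound (w : R -> R) t : (forall x, continuous w x) -> (forall x, Rabs (w x) <= 1) ->
  0 <= t <= T -> Rabs (int_R (fun x => w x * f x t)) <= lg.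
Proof.
  intros Hwc Hwb Ht.
  assert (Hdom : forall x, Rabs (w x * f x t) <= 1 * g x).
  { intros x. apply abs_mul_le; auto. apply Hgb; auto. }
  destruct (int_w (fun x => w x * f x t) 1 ltac:(lra)) as [H1 H2]; auto.
  intros x. apply cmul; auto. apply f_cont; auto.
  apply (int_abs_le _ g _ _ H1 Hg H2). intros x. specialize (Hdom x). lra.
Qed.

Lemma a_bound t : 0 <= t <= T -> Rabs (a_ t) <= lg.
Proof.
  intros Ht. apply (wbound (fun x => kappa - p x)); auto.
  - intros; apply cminus. apply cconst. apply p_cont.
  - intros x. pose proof (p_pos x). pose proof (p_le1 x). apply Rabs_le. lra.
Qed.

Lemma lg_nonneg : 0 <= lg.
Proof. pose proof (a_bound 0 ltac:(lra)). pose proof (Rabs_pos (a_ 0)). lra. Qed.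

Lemma b_bound t : 0 <= t <= T -> Rabs (b_ t) <= lg * lg.
Proof.
  intros Ht. unfold b_. apply abs_mul_le.
  - apply wbound; auto. apply p_cont. apply p_abs.
  - apply (wbound (fun x => 1 - p x)); auto.
    + intros; apply cminus. apply cconst. apply p_cont.
    + intros x. pose proof (p_pos x). pose proof (p_le1 x). apply Rabs_le. lra.
Qed.

Definition C2b := (M - 1) ^ 2 / 2 * (lg * lg + / (M - 1) * (lg * lg)).

Lemma c2_bound t : 0 <= t <= T -> Rabs (c2 t) <= C2b.
Proof.
  intros Ht. unfold c2, C2b.
  assert (HM1 : 0 < / (M - 1)) by (apply Rinv_0_lt_compat; lra).
  assert (0 <= (M - 1) ^ 2 / 2) by (apply Rmult_le_pos; [apply pow2_ge_0 | lra]).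
  apply abs_mul_le. rewrite Rabs_pos_eq; lra.
  eapply Rle_trans. apply Rabs_triang. apply Rplus_le_compat.
  - rewrite <- RPow_abs. pose proof (a_bound t Ht). pose proof (Rabs_pos (a_ t)). simpl. nra.
  - apply abs_mul_le. rewrite Rabs_pos_eq; lra. apply b_bound; auto.
Qed.

Lemma D1_bound x t : 0 <= t <= T -> Rabs (D1 x t) <= (cp + 1) * g x.
Proof.
  intros Ht. destruct (Hgb x t Ht) as [h1 [h2 h3]]. unfold D1.
  eapply Rle_trans. apply Rabs_triang.
  pose proof (abs_mul_le _ _ _ _ (dp_abs x) h1). pose proof (abs_mul_le _ _ _ _ (p_abs x) h2). lra.
Qed.

Lemma D2_bound x t : 0 <= t <= T -> Rabs (D2 x t) <= (3 * cp + 1) * g x.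
Proof.
  intros Ht. destruct (Hgb x t Ht) as [h1 [h2 h3]]. unfold D2.
  eapply Rle_trans. apply Rabs_triang. eapply Rle_trans. apply Rplus_le_compat_r. apply Rabs_triang.
  pose proof (abs_mul_le _ _ _ _ (d2p_abs x) h1).
  assert (Rabs 2 <= 2) by (rewrite Rabs_pos_eq; lra).
  pose proof (abs_mul_le _ _ _ _ H0 (abs_mul_le _ _ _ _ (dp_abs x) h2)).
  pose proof (abs_mul_le _ _ _ _ (p_abs x) h3). lra.
Qed.


Lemma c2d_f x s : continuity_2d_pt (fun u v => f u (clamp T v)) x s.
Proof. apply c2d_strip; auto; lra. Qed.
Lemma c2d_fx x s : continuity_2d_pt (fun u v => fx u (clamp T v)) x s.
Proof. apply c2d_strip; auto; lra. Qed.
Lemma c2d_fxx x s : continuity_2d_pt (fun u v => fxx u (clamp T v)) x s.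
Proof. apply c2d_strip; auto; lra. Qed.
Lemma c2d_a x s : continuity_2d_pt (fun u v => a_ (clamp T v)) x s.
Proof. apply c2d_tc. apply aC_cont. Qed.
Lemma c2d_c2 x s : continuity_2d_pt (fun u v => c2 (clamp T v)) x s.
Proof. apply c2d_tc. apply c2C_cont. Qed.

Ltac solve_c1 := first [apply p_cont | apply dp_cont | apply Hd2c | apply cconst | assumption | auto].
Ltac c2d_solve := repeat first [ apply continuity_2d_pt_const | apply c2d_f | apply c2d_fx | apply c2d_fxx
   | apply c2d_a | apply c2d_c2 | (apply c2d_x; solve_c1)
   | apply continuity_2d_pt_minus | apply continuity_2d_pt_plus | apply continuity_2d_pt_mult
   | apply continuity_2d_pt_opp ].

Lemma wderiv (w w1 w2 : R -> R) B t0 :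
  (forall x, is_derive w x (w1 x)) -> (forall x, is_derive w1 x (w2 x)) -> (forall x, continuous w2 x) ->
  (forall x, Rabs (w x) <= B /\ Rabs (w1 x) <= B /\ Rabs (w2 x) <= B) -> 0 < t0 < T ->
  is_derive (fun t => int_R (fun x => w x * f x t)) t0
    (int_R (fun x => c1 * a_ t0 * (w1 x * (p x * f x t0)) + c2 t0 * (w2 x * (p x * f x t0)))).
Proof.
  intros Hw Hw1 Hw2c Hwb Ht0.
  assert (B0 : 0 <= B) by (destruct (Hwb 0) as [h _]; pose proof (Rabs_pos (w 0)); lra).
  assert (Hwc : forall x, continuous w x) by (intros; eapply der_cont; apply Hw).
  assert (Hw1c : forall x, continuous w1 x) by (intros; eapply der_cont; apply Hw1).
  assert (Hc1 : 0 < c1) by (unfold c1; apply Rdiv_lt_0_compat; [lra | apply sqrt_lt_R0; lra]).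
  pose proof lg_nonneg as Hlg.
  assert (HC2b : 0 <= C2b) by (pose proof (c2_bound 0 ltac:(lra)); pose proof (Rabs_pos (c2 0)); lra).
  set (Ht := fun x s => w x * (c2 (clamp T s) * D2 x (clamp T s) - c1 * a_ (clamp T s) * D1 x (clamp T s))).
  set (r := Rmin t0 (T - t0)).
  assert (Hr : 0 < r) by (unfold r; apply Rmin_glb_lt; lra).
  assert (Hrs : forall s, Rabs (s - t0) < r -> 0 < s < T).
  { intros s Hs. apply Rabs_def2 in Hs. pose proof (Rmin_l t0 (T - t0)). pose proof (Rmin_r t0 (T - t0)).
    unfold r in Hs. split; lra. }
  set (Cbig := B * (C2b * (3 * cp + 1) + c1 * lg * (cp + 1))).
  assert (Hdom : forall x s, Rabs (Ht x s) <= Cbig * g x).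
  { intros x s. unfold Ht. pose proof (clamp_range T s ltac:(lra)) as Hcs.
    assert (h1 : Rabs (c2 (clamp T s) * D2 x (clamp T s)) <= C2b * ((3 * cp + 1) * g x)).
    { apply abs_mul_le. apply c2_bound; auto. apply D2_bound; auto. }
    assert (h2 : Rabs (c1 * a_ (clamp T s) * D1 x (clamp T s)) <= (c1 * lg) * ((cp + 1) * g x)).
    { apply abs_mul_le. apply abs_mul_le. rewrite Rabs_pos_eq; lra. apply a_bound; auto.
      apply D1_bound; auto. }
    eapply Rle_trans. apply abs_mul_le. apply (Hwb x).
    eapply Rle_trans. apply abs_sub. apply Rplus_le_compat; [exact h1 | exact h2].
    right. unfold Cbig. ring. }
  assert (Hcont : forall x, continuity_2d_pt Ht x t0).
  { intros x. unfold Ht, D1, D2. c2d_solve. }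
  assert (HCb : 0 <= Cbig).
  { pose proof (Hdom 0 0). pose proof (Rabs_pos (Ht 0 0)). pose proof (g_nonneg 0).
    unfold Cbig. apply Rmult_le_pos; auto. apply Rplus_le_le_0_compat; apply Rmult_le_pos; try lra.
    apply Rmult_le_pos; lra. }
  destruct (param_deriv (fun x s => w x * f x s) Ht (fun x => Cbig * g x) (Cbig * lg) t0 r
     (fun s => int_R (fun x => w x * f x s))) as [l [Hl Hder]].
  - apply has_int_scal; auto.
  - auto.
  - intros s Hs. pose proof (Hrs s Hs). apply (int_w _ B); auto.
    intros; apply cmul; auto; apply f_cont; lra.
    intros x; apply abs_mul_le; auto. apply Hwb. apply Hgb; lra.
  - intros s a b Hs. pose proof (Hrs s Hs). apply (int_w _ B); auto.
    intros; apply cmul; auto; apply f_cont; lra.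
    intros x; apply abs_mul_le; auto. apply Hwb. apply Hgb; lra.
  - intros a b. apply (ex_RInt_continuous (V:=R_CompleteNormedModule)). intros z _.
    apply (c2d_restrict Ht). apply Hcont.
  - intros x s Hs. pose proof (Hrs s Hs). eapply dval. apply is_derive_scal. apply Hft; auto.
    unfold Ht. rewrite clamp_id by lra. rewrite ft_eq; auto.
  - intros x s _. apply Hdom.
  - exact Hcont.
  - set (J := fun x => c1 * a_ t0 * (w1 x * (p x * f x t0)) + c2 t0 * (w2 x * (p x * f x t0))).
    assert (Ht0r : 0 <= t0 <= T) by lra.
    assert (HJ : has_int_R J (int_R J) /\ (forall a b, ex_RInt J a b)).
    { apply (int_w J (c1 * lg * B + C2b * B)).
      pose proof (Rmult_le_pos _ _ (Rmult_le_pos _ _ (Rlt_le _ _ Hc1) Hlg) B0);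
      pose proof (Rmult_le_pos _ _ HC2b B0); lra.
      - intros x. unfold J. apply cplus; apply cmul; try apply cconst; apply cmul; auto;
        apply cmul; try apply p_cont; apply f_cont; auto.
      - intros x. unfold J. destruct (Hgb x t0 Ht0r) as [hf _].
        assert (hpf : Rabs (p x * f x t0) <= 1 * g x) by (apply abs_mul_le; auto; apply p_abs).
        eapply Rle_trans. apply Rabs_triang.
        assert (Rabs (c1 * a_ t0 * (w1 x * (p x * f x t0))) <= (c1 * lg) * (B * (1 * g x))).
        { apply abs_mul_le. apply abs_mul_le. rewrite Rabs_pos_eq; lra. apply a_bound; auto.
          apply abs_mul_le; auto. apply Hwb. }
        assert (Rabs (c2 t0 * (w2 x * (p x * f x t0))) <= C2b * (B * (1 * g x))).
        { apply abs_mul_le. apply c2_bound; auto. apply abs_mul_le; auto. apply Hwb. }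
        assert (E : c1 * lg * (B * (1 * g x)) + C2b * (B * (1 * g x)) = (c1 * lg * B + C2b * B) * g x) by ring.
        lra. }
    destruct HJ as [HJ1 HJ2].
    set (K := fun x => - (c1 * a_ t0) * (w x * (p x * f x t0)) + c2 t0 * (w x * D1 x t0 - w1 x * (p x * f x t0))).
    assert (HK : forall x, is_derive K x (Ht x t0 - J x)).
    { intros x. unfold K. eapply dval.
      apply dplus. apply dmul. apply dconst. apply dmul. apply Hw. apply dmul. apply Hp. apply Hfx; auto.
      apply dmul. apply dconst. apply dminus. apply dmul. apply Hw. apply D1_der; auto.
      apply dmul. apply Hw1. apply dmul. apply Hp. apply Hfx; auto.
      unfold Ht, J. rewrite clamp_id by auto. unfold D1. ring. }
    assert (Hkc : forall x, continuous (fun x => Ht x t0 - J x) x).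
    { intros x. apply cminus. apply (c2d_restrict Ht). apply Hcont.
      unfold J. apply cplus; apply cmul; try apply cconst; apply cmul; auto;
        apply cmul; try apply p_cont; apply f_cont; auto. }
    assert (Hz := int_deriv_zero K (fun x => Ht x t0 - J x) (l - int_R J) HK Hkc
       (has_int_minus _ _ _ _ Hl HJ1)).
    destruct (Hvan t0 Ht0r) as [[vf1 vf2] [vx1 vx2]].
    set (Bk := c1 * lg * B + C2b * B * (cp + 2)).
    assert (Bk0 : 0 <= Bk).
    { unfold Bk. pose proof (Rmult_le_pos _ _ (Rmult_le_pos _ _ (Rlt_le _ _ Hc1) Hlg) B0).
      pose proof (Rmult_le_pos _ _ (Rmult_le_pos _ _ HC2b B0) (ltac:(lra) : 0 <= cp + 2)). lra. }
    assert (HKb : forall x, Rabs (K x) <= Bk * (Rabs (f x t0) + Rabs (fx x t0))).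
    { intros x. unfold K. set (S := Rabs (f x t0) + Rabs (fx x t0)).
      assert (hf : Rabs (f x t0) <= S) by (unfold S; pose proof (Rabs_pos (fx x t0)); lra).
      assert (hpf : Rabs (p x * f x t0) <= 1 * S) by (apply abs_mul_le; auto; apply p_abs).
      assert (hD : Rabs (D1 x t0) <= (cp + 1) * S).
      { unfold D1. eapply Rle_trans. apply Rabs_triang.
        pose proof (abs_mul_le _ _ _ _ (dp_abs x) hf).
        assert (Rabs (fx x t0) <= S) by (unfold S; pose proof (Rabs_pos (f x t0)); lra).
        pose proof (abs_mul_le _ _ _ _ (p_abs x) H0). lra. }
      destruct (Hwb x) as [hw [hw1 _]].
      assert (h1 : Rabs (- (c1 * a_ t0) * (w x * (p x * f x t0))) <= (c1 * lg) * (B * (1 * S))).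
      { apply abs_mul_le. rewrite Rabs_Ropp. apply abs_mul_le. rewrite Rabs_pos_eq; lra. apply a_bound; auto.
        apply abs_mul_le; auto. }
      assert (h2 : Rabs (c2 t0 * (w x * D1 x t0 - w1 x * (p x * f x t0))) <= C2b * (B * ((cp + 1) * S) + B * (1 * S))).
      { apply abs_mul_le. apply c2_bound; auto. eapply Rle_trans. apply abs_sub.
        apply Rplus_le_compat; apply abs_mul_le; auto. }
      eapply Rle_trans. apply Rabs_triang.
      assert (E : c1 * lg * (B * (1 * S)) + C2b * (B * ((cp + 1) * S) + B * (1 * S)) = Bk * S) by (unfold Bk; ring).
      lra. }
    assert (l = int_R J).
    { apply Rminus_diag_uniq. apply Hz.
      apply (vanish_dom _ K (fun x => f x t0) (fun x => fx x t0) Bk); auto.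
      apply (vanish_dom _ K (fun x => f x t0) (fun x => fx x t0) Bk); auto. }
    subst l. exact Hder.
Qed.

Definition mass t := int_R (fun x => (fun _ => 1) x * f x t).

Lemma one_bound x : Rabs ((fun _ : R => 1) x) <= 1.
Proof. rewrite Rabs_pos_eq; lra. Qed.

Lemma mass_der t : 0 < t < T -> is_derive mass t 0.
Proof.
  intros Ht. eapply dval. apply (wderiv (fun _ => 1) (fun _ => 0) (fun _ => 0) 1); auto.
  - intros; apply dconst.
  - intros; apply dconst.
  - intros; apply cconst.
  - intros x. rewrite Rabs_R0, Rabs_pos_eq; lra.
  - apply has_int_int. apply has_int_val with (0 * lg). ring.
    apply has_int_ext with (fun x => 0 * g x). intros; ring. apply has_int_scal; auto.
Qed.

Lemma mass_eq t : 0 <= t <= T -> mass t = 1.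
Proof.
  intros Ht.
  assert (M0 : mass 0 = 1).
  { unfold mass. apply has_int_int. apply has_int_ext with f0; auto.
    intros; rewrite Hfinit; ring. }
  destruct (Req_dec t 0) as [E|E]. subst; auto.
  set (mC := fun v => mass (clamp T v)).
  assert (C : forall y, continuous mC y) by (intros; apply (wcontC (fun _ => 1) 1); [intros; apply cconst | apply one_bound]).
  assert (D : forall x, 0 < x < t -> is_derive mC x 0).
  { intros x Hx. apply der_clamp. lra. apply mass_der. lra. }
  pose proof (mono_interval mC (fun _ => 0) t ltac:(lra) D ltac:(intros; lra) (C 0) (C t)).
  pose proof (mono_interval (fun v => - mC v) (fun _ => 0) t ltac:(lra)).
  assert (- mC 0 <= - mC t).
  { apply H0. intros x Hx. eapply dval. apply (is_derive_opp (V:=R_NormedModule)). apply D; auto.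
    simpl. unfold opp; simpl. ring.
    intros; lra.
    apply (continuous_opp (V:=R_NormedModule)). apply C.
    apply (continuous_opp (V:=R_NormedModule)). apply C. }
  unfold mC in *. rewrite clamp_id in H, H1 by lra. rewrite clamp_id in H, H1 by auto. lra.
Qed.

Lemma intw_has (w : R -> R) t : (forall x, continuous w x) -> (forall x, Rabs (w x) <= 1) -> 0 <= t <= T ->
  has_int_R (fun x => w x * f x t) (int_R (fun x => w x * f x t)) /\
  (forall a b, ex_RInt (fun x => w x * f x t) a b).
Proof.
  intros Hc Hb Ht. apply (int_w _ 1). lra. intros; apply cmul; auto. apply f_cont; auto.
  intros x. apply abs_mul_le; auto. apply Hgb; auto.
Qed.

Lemma a_bound1 t : 0 <= t <= T -> Rabs (a_ t) <= 1.
Proof.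
  intros Ht. replace 1 with (mass t) by (apply mass_eq; auto). unfold a_, mass.
  assert (Hb : forall x, Rabs (kappa - p x) <= 1).
  { intros x. pose proof (p_pos x). pose proof (p_le1 x). apply Rabs_le. lra. }
  destruct (intw_has (fun x => kappa - p x) t) as [h1 h2]; auto.
  intros; apply cminus. apply cconst. apply p_cont.
  destruct (intw_has (fun _ => 1) t) as [h3 h4]; auto. intros; apply cconst. apply one_bound.
  apply (int_abs_le _ _ _ _ h1 h3 h2). intros x.
  rewrite Rmult_1_l. rewrite Rabs_mult. rewrite (Rabs_pos_eq (f x t)) by (apply Hfpos; auto).
  pose proof (Hb x). pose proof (Hfpos x t Ht). nra.
Qed.

Lemma b_bound1 t : 0 <= t <= T -> 0 <= b_ t <= 1.
Proof.
  intros Ht. unfold b_.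
  assert (Hb : forall x, Rabs (1 - p x) <= 1).
  { intros x. pose proof (p_pos x). pose proof (p_le1 x). apply Rabs_le. lra. }
  assert (Hc : forall x, continuous (fun x => 1 - p x) x) by (intros; apply cminus; [apply cconst | apply p_cont]).
  destruct (intw_has p t p_cont p_abs Ht) as [h1 h2].
  destruct (intw_has (fun x => 1 - p x) t Hc Hb Ht) as [h3 h4].
  assert (P1 : 0 <= int_R (fun x => p x * f x t)).
  { apply (int_nonneg _ _ h1 h2). intros; apply Rmult_le_pos. pose proof (p_pos x); lra. apply Hfpos; auto. }
  assert (P2 : 0 <= int_R (fun x => (1 - p x) * f x t)).
  { apply (int_nonneg _ _ h3 h4). intros; apply Rmult_le_pos. pose proof (p_le1 x); lra. apply Hfpos; auto. }
  assert (S : int_R (fun x => p x * f x t) + int_R (fun x => (1 - p x) * f x t) = 1).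
  { transitivity (mass t); [| apply mass_eq; auto]. unfold mass. symmetry. apply has_int_int.
    apply has_int_ext with (fun x => p x * f x t + (1 - p x) * f x t). intros; ring.
    apply has_int_plus; auto. }
  split. apply Rmult_le_pos; auto. nra.
Qed.

Definition C2 := (M - 1) ^ 2 / 2 * (1 + / (M - 1)).
Definition c0 := (c1 + C2) * (cp + 2 * cp ^ 2).

Lemma c2_bound1 t : 0 <= t <= T -> Rabs (c2 t) <= C2.
Proof.
  intros Ht. unfold c2, C2.
  assert (HM1 : 0 < / (M - 1)) by (apply Rinv_0_lt_compat; lra).
  assert (0 <= (M - 1) ^ 2 / 2) by (apply Rmult_le_pos; [apply pow2_ge_0 | lra]).
  apply abs_mul_le. rewrite Rabs_pos_eq; lra.
  pose proof (a_bound1 t Ht). pose proof (b_bound1 t Ht).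
  assert (a_ t ^ 2 <= 1).
  { rewrite <- pow2_abs. pose proof (Rabs_pos (a_ t)). simpl. nra. }
  rewrite Rabs_pos_eq. 2: { pose proof (pow2_ge_0 (a_ t)). nra. }
  nra.
Qed.

Definition beta_ t := int_R (fun x => (1 - p x) * p x * f x t).

Lemma Jbound (v1 v2 : R -> R) t : 0 < t < T ->
  (forall x, continuous v1 x) -> (forall x, continuous v2 x) ->
  (forall x, Rabs (v1 x) <= (cp + 2 * cp ^ 2) * (1 - p x)) ->
  (forall x, Rabs (v2 x) <= (cp + 2 * cp ^ 2) * (1 - p x)) ->
  Rabs (int_R (fun x => c1 * a_ t * (v1 x * (p x * f x t)) + c2 t * (v2 x * (p x * f x t))))
   <= c0 * beta_ t.
Proof.
  intros Ht Hc1 Hc2 Hb1 Hb2. assert (Htr : 0 <= t <= T) by lra.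
  assert (Hc1p : 0 < c1) by (unfold c1; apply Rdiv_lt_0_compat; [lra | apply sqrt_lt_R0; lra]).
  assert (Kp : 0 <= cp + 2 * cp ^ 2) by (pose proof (pow2_ge_0 cp); lra).
  assert (HC2 : 0 <= C2) by (pose proof (c2_bound1 0 ltac:(lra)); pose proof (Rabs_pos (c2 0)); lra).
  set (J := fun x => c1 * a_ t * (v1 x * (p x * f x t)) + c2 t * (v2 x * (p x * f x t))).
  assert (Hw : forall x, Rabs ((1 - p x) * p x) <= 1).
  { intros x. pose proof (p_pos x). pose proof (p_le1 x). apply Rabs_le. nra. }
  assert (Hwc : forall x, continuous (fun x => (1 - p x) * p x) x).
  { intros; apply cmul; [apply cminus; [apply cconst | apply p_cont] | apply p_cont]. }
  destruct (intw_has (fun x => (1 - p x) * p x) t Hwc Hw Htr) as [hb1 hb2].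
  assert (HJb : forall x, Rabs (J x) <= c0 * ((1 - p x) * p x * f x t)).
  { intros x. unfold J.
    assert (pf : 0 <= p x * f x t) by (apply Rmult_le_pos; [pose proof (p_pos x); lra | apply Hfpos; auto]).
    assert (h1 : Rabs (c1 * a_ t * (v1 x * (p x * f x t))) <= (c1 * 1) * (((cp + 2 * cp ^ 2) * (1 - p x)) * (p x * f x t))).
    { apply abs_mul_le. apply abs_mul_le. rewrite Rabs_pos_eq; lra. apply a_bound1; auto.
      apply abs_mul_le. auto. rewrite Rabs_pos_eq; lra. }
    assert (h2 : Rabs (c2 t * (v2 x * (p x * f x t))) <= C2 * (((cp + 2 * cp ^ 2) * (1 - p x)) * (p x * f x t))).
    { apply abs_mul_le. apply c2_bound1; auto.
      apply abs_mul_le. auto. rewrite Rabs_pos_eq; lra. }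
    eapply Rle_trans. apply Rabs_triang.
    assert (E : c1 * 1 * ((cp + 2 * cp ^ 2) * (1 - p x) * (p x * f x t)) +
       C2 * ((cp + 2 * cp ^ 2) * (1 - p x) * (p x * f x t)) = c0 * ((1 - p x) * p x * f x t)).
    { unfold c0. ring. }
    lra. }
  assert (HJ : has_int_R J (int_R J) /\ (forall a b, ex_RInt J a b)).
  { apply (int_w J c0).
    - unfold c0. apply Rmult_le_pos; lra.
    - intros x. unfold J. apply cplus; apply cmul; try apply cconst; apply cmul; auto;
        apply cmul; try apply p_cont; apply f_cont; auto.
    - intros x. eapply Rle_trans. apply HJb. apply Rmult_le_compat_l.
      unfold c0. apply Rmult_le_pos; lra.
      eapply Rle_trans. apply Rle_abs. eapply Rle_trans. apply abs_mul_le. apply Hw. apply Hgb; auto.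
      lra. }
  destruct HJ as [HJ1 HJ2].
  apply (int_abs_le J (fun x => c0 * ((1 - p x) * p x * f x t)) _ _ HJ1); auto.
  apply has_int_scal. auto.
Qed.

Definition wb x := (1 - p x) * p x.
Definition wb1 x := (0 - dp x) * p x + (1 - p x) * dp x.
Definition wb2 x := ((0 - d2p x) * p x + (0 - dp x) * dp x) + ((0 - dp x) * dp x + (1 - p x) * d2p x).

Lemma wb_der x : is_derive wb x (wb1 x).
Proof. unfold wb, wb1. eapply dval. apply dmul. apply dminus. apply dconst. apply Hp. apply Hp. cbv beta. ring. Qed.
Lemma wb1_der x : is_derive wb1 x (wb2 x).
Proof.
  unfold wb1, wb2. eapply dval. apply dplus; apply dmul.
  apply dminus. apply dconst. apply Hdp. apply Hp. apply dminus. apply dconst. apply Hp. apply Hdp.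
  cbv beta. ring.
Qed.

Lemma wb2_cont x : continuous wb2 x.
Proof.
  unfold wb2.
  assert (cm : forall h, (forall y, continuous h y) -> continuous (fun x => 0 - h x) x).
  { intros h Hh. apply cminus. apply cconst. apply Hh. }
  apply cplus; apply cplus; apply cmul.
  - apply cm. apply Hd2c.
  - apply p_cont.
  - apply cm. apply dp_cont.
  - apply dp_cont.
  - apply cm. apply dp_cont.
  - apply dp_cont.
  - apply cminus. apply cconst. apply p_cont.
  - apply Hd2c.
Qed.

Lemma wb1_bound x : Rabs (wb1 x) <= (cp + 2 * cp ^ 2) * (1 - p x).
Proof.
  replace (wb1 x) with (dp x * (1 - 2 * p x)) by (unfold wb1; ring).
  pose proof (p_pos x). pose proof (p_le1 x). pose proof (Hdpb x).
  assert (Rabs (1 - 2 * p x) <= 1) by (apply Rabs_le; lra).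
  eapply Rle_trans. apply abs_mul_le. rewrite Rabs_pos_eq by lra. apply (proj2 (Hdpb x)). apply H2.
  pose proof (pow2_ge_0 cp). nra.
Qed.

Lemma wb2_bound x : Rabs (wb2 x) <= (cp + 2 * cp ^ 2) * (1 - p x).
Proof.
  replace (wb2 x) with (d2p x * (1 - 2 * p x) - 2 * (dp x * dp x)) by (unfold wb2; ring).
  pose proof (p_pos x). pose proof (p_le1 x). pose proof (Hdpb x).
  assert (Rabs (1 - 2 * p x) <= 1) by (apply Rabs_le; lra).
  eapply Rle_trans. apply abs_sub.
  assert (h1 : Rabs (d2p x * (1 - 2 * p x)) <= cp * (1 - p x) * 1) by (apply abs_mul_le; auto).
  assert (h2 : Rabs (2 * (dp x * dp x)) <= 2 * ((cp * (1 - p x)) * (cp * (1 - p x)))).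
  { apply abs_mul_le. rewrite Rabs_pos_eq; lra. apply abs_mul_le; rewrite Rabs_pos_eq; lra. }
  assert (h3 : (1 - p x) * (1 - p x) <= 1 - p x) by nra.
  assert (h4 : 2 * ((cp * (1 - p x)) * (cp * (1 - p x))) <= 2 * cp ^ 2 * (1 - p x)).
  { replace (2 * ((cp * (1 - p x)) * (cp * (1 - p x)))) with (2 * cp ^ 2 * ((1 - p x) * (1 - p x))) by ring.
    apply Rmult_le_compat_l; auto. pose proof (pow2_ge_0 cp); lra. }
  lra.
Qed.

Lemma beta_der t : 0 < t < T -> exists db, is_derive beta_ t db /\ Rabs db <= c0 * beta_ t.
Proof.
  intros Ht.
  assert (Kb : forall x, (cp + 2 * cp ^ 2) * (1 - p x) <= 1 + cp + 2 * cp ^ 2).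
  { intros x. pose proof (p_pos x). pose proof (p_le1 x). pose proof (pow2_ge_0 cp).
    assert ((cp + 2 * cp ^ 2) * (1 - p x) <= (cp + 2 * cp ^ 2) * 1) by (apply Rmult_le_compat_l; lra). lra. }
  exists (int_R (fun x => c1 * a_ t * (wb1 x * (p x * f x t)) + c2 t * (wb2 x * (p x * f x t)))).
  split.
  - apply (wderiv wb wb1 wb2 (1 + cp + 2 * cp ^ 2)); [ | | | | exact Ht].
    + apply wb_der.
    + apply wb1_der.
    + apply wb2_cont.
    + intros x. split; [|split].
      * unfold wb. pose proof (p_pos x). pose proof (p_le1 x). pose proof (pow2_ge_0 cp).
        assert (0 <= (1 - p x) * p x <= 1) by (split; [apply Rmult_le_pos | ]; nra).
        rewrite Rabs_pos_eq; lra.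
      * eapply Rle_trans. apply wb1_bound. apply Kb.
      * eapply Rle_trans. apply wb2_bound. apply Kb.
  - apply Jbound; [exact Ht | | | | ].
    + intros x. eapply der_cont. apply wb1_der.
    + apply wb2_cont.
    + apply wb1_bound.
    + apply wb2_bound.
Qed.

Lemma alpha_der t : 0 < t < T -> exists da, is_derive (fun t => int_R (fun x => p x * f x t)) t da
   /\ Rabs da <= c0 * beta_ t.
Proof.
  intros Ht.
  assert (Kb : forall x, cp * (1 - p x) <= (cp + 2 * cp ^ 2) * (1 - p x)).
  { intros x. pose proof (p_pos x). pose proof (p_le1 x). pose proof (pow2_ge_0 cp).
    apply Rmult_le_compat_r; lra. }
  exists (int_R (fun x => c1 * a_ t * (dp x * (p x * f x t)) + c2 t * (d2p x * (p x * f x t)))).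
  split.
  - apply (wderiv p dp d2p (cp + 1)).
    + apply Hp.
    + apply Hdp.
    + apply Hd2c.
    + intros x. pose proof (p_abs x). pose proof (dp_abs x). pose proof (d2p_abs x). split; [|split]; lra.
    + auto.
  - apply Jbound; [exact Ht | | | | ].
    + apply dp_cont.
    + apply Hd2c.
    + intros x. eapply Rle_trans. rewrite Rabs_pos_eq; apply (Hdpb x). apply Kb.
    + intros x. eapply Rle_trans. apply Hd2pb. apply Kb.
Qed.

Lemma beta_lower t : 0 < t <= T -> beta_ t >= beta_ 0 * exp (- c0 * t).
Proof.
  intros Ht.
  assert (Hwbc : forall x, continuous (fun x => (1 - p x) * p x) x).
  { intros; apply cmul; [apply cminus; [apply cconst | apply p_cont] | apply p_cont]. }
  assert (Hwbb : forall x, Rabs ((1 - p x) * p x) <= 1).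
  { intros x. pose proof (p_pos x). pose proof (p_le1 x). apply Rabs_le. nra. }
  set (phi := fun v => beta_ (clamp T v) * exp (c0 * v)).
  assert (Cphi : forall y, continuous phi y).
  { intros y. apply cmul. apply (wcontC (fun x => (1 - p x) * p x) 1); auto.
    eapply der_cont. apply dexp. }
  assert (D : forall x, 0 < x < t -> exists d, is_derive phi x d /\ 0 <= d).
  { intros x Hx. destruct (beta_der x ltac:(lra)) as [db [Hdb Hb]].
    exists (db * exp (c0 * x) + beta_ (clamp T x) * (c0 * exp (c0 * x))). split.
    - apply (dmul (fun v => beta_ (clamp T v)) (fun v => exp (c0 * v))). apply der_clamp. lra. auto. apply dexp.
    - rewrite clamp_id by lra.
      replace (db * exp (c0 * x) + beta_ x * (c0 * exp (c0 * x))) with ((db + c0 * beta_ x) * exp (c0 * x)) by ring.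
      apply Rmult_le_pos. apply Rabs_le_between in Hb. lra. pose proof (exp_pos (c0 * x)); lra. }
  pose proof (mono_interval phi (Derive phi) t ltac:(lra)) as MI.
  assert (Hle : phi 0 <= phi t).
  { apply MI.
    - intros x Hx. destruct (D x Hx) as [d [Hd _]]. rewrite (is_derive_unique phi x d Hd). auto.
    - intros x Hx. destruct (D x Hx) as [d [Hd Hd0]]. rewrite (is_derive_unique phi x d Hd). auto.
    - apply Cphi.
    - apply Cphi. }
  unfold phi in Hle. rewrite !clamp_id in Hle by lra.
  rewrite Rmult_0_r, exp_0, Rmult_1_r in Hle.
  assert (E : exp (c0 * t) * exp (- c0 * t) = 1).
  { rewrite <- exp_plus. replace (c0 * t + - c0 * t) with 0 by ring. apply exp_0. }
  pose proof (exp_pos (- c0 * t)).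
  apply Rle_ge.
  apply Rmult_le_compat_r with (r := exp (- c0 * t)) in Hle; [| lra].
  rewrite Rmult_assoc, E, Rmult_1_r in Hle. exact Hle.
Qed.

Lemma final_sec :
  (forall t, 0 < t < T ->
     (exists da, is_derive (fun t => int_R (fun x => p x * f x t)) t da /\ Rabs da <= c0 * beta_ t) /\
     (exists db, is_derive beta_ t db /\ Rabs db <= c0 * beta_ t)) /\
  (forall t, 0 < t <= T -> beta_ t >= beta_ 0 * exp (- c0 * t)).
Proof.
  split.
  - intros t Ht. split. apply alpha_der; auto. apply beta_der; auto.
  - apply beta_lower.
Qed.

End Main.
Theorem lemma4p2 (M tau cp : R) (HM : 1 < M) (Htau : 0 < tau) (Hcp : 0 < cp) :
  exists c0 : R,
  forall (kappa T pmin : R) (p dp d2p f0 : R -> R) (f fx fxx ft : R -> R -> R),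
    0 < kappa < 1 -> 0 < T ->
    (* p in C^2(R) with derivatives dp, d2p *)
    (forall x, is_derive p x (dp x)) ->
    (forall x, is_derive dp x (d2p x)) ->
    (forall x, continuous d2p x) ->
    0 <= pmin ->
    (forall x, pmin < p x <= 1) ->
    (forall x, 0 <= dp x <= cp * (1 - p x)) ->
    (forall x, Rabs (d2p x) <= cp * (1 - p x)) ->
    (* initial datum *)
    (forall x, 0 <= f0 x) ->
    has_int_R f0 1 ->
    integrable_R (fun x => p x * f0 x ^ 2) ->
    (* regularity of f on R x [0,T]: partial derivatives fx, fxx, ft *)
    (forall x t, 0 <= t <= T -> is_derive (fun y => f y t) x (fx x t)) ->
    (forall x t, 0 <= t <= T -> is_derive (fun y => fx y t) x (fxx x t)) ->
    (forall x t, 0 < t < T -> is_derive (fun s => f x s) t (ft x t)) ->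
    cont_on_strip T f -> cont_on_strip T fx -> cont_on_strip T fxx ->
    (* decay / integrability: no boundary terms in integrations by parts *)
    (exists g : R -> R, integrable_R g /\
       forall x t, 0 <= t <= T ->
         Rabs (f x t) <= g x /\ Rabs (fx x t) <= g x /\ Rabs (fxx x t) <= g x) ->
    (forall t, 0 <= t <= T ->
       vanishes_at_infty (fun x => f x t) /\ vanishes_at_infty (fun x => fx x t)) ->
    (forall x t, 0 <= t <= T -> 0 <= f x t) ->
    (forall x, f x 0 = f0 x) ->
    (* the equation *)
    (let a := fun t => int_R (fun x => (kappa - p x) * f x t) in
     let b := fun t => int_R (fun x => p x * f x t) * int_R (fun x => (1 - p x) * f x t) in
     forall x t, 0 < t < T ->
       ft x t + (M - 1) / sqrt tau * a t * Derive (fun y => p y * f y t) x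
       - (M - 1) ^ 2 / 2 * (a t ^ 2 + / (M - 1) * b t)
           * Derive_n (fun y => p y * f y t) 2 x = 0) ->
    let alpha := fun t => int_R (fun x => p x * f x t) in
    let beta := fun t => int_R (fun x => (1 - p x) * p x * f x t) in
    (forall t, 0 < t < T ->
       (exists da, is_derive alpha t da /\ Rabs da <= c0 * beta t) /\
       (exists db, is_derive beta t db /\ Rabs db <= c0 * beta t)) /\
    (forall t, 0 < t <= T -> beta t >= beta 0 * exp (- c0 * t)).

Proof.
  exists (c0 M tau cp).
  intros kappa T pmin p dp d2p f0 f fx fxx ft Hk HT Hp Hdp Hd2c Hpmin Hpr Hdpb Hd2pb Hf0 Hf0i Hf0sq
    Hfx Hfxx Hft Hcf Hcfx Hcfxx [g [[lg Hg] Hgb]] Hvan Hfpos Hfinit Heq alpha beta.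
  exact (final_sec M tau cp kappa T pmin p dp d2p f0 f fx fxx ft g lg HM Htau Hcp Hk HT Hp Hdp Hd2c
    Hpmin Hpr Hdpb Hd2pb Hf0i Hfx Hfxx Hft Hcf Hcfx Hcfxx Hg Hgb Hvan Hfpos Hfinit Heq).
Qed.
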